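(* Let $p$ be a prime and $n\ge 1$, and suppose $p^n-1=st$ with positive integers $s<t$ and $\gcd(s,t)=1$. Let $\alpha$ be a generator of the multiplicative group $\mathbb{F}_{p^n}^\times$, and put $\beta=\alpha^t$, $\gamma=\alpha^s$. Let $\psi:\mathbb{F}_{p^n}\to\mathbb{F}_p$ be a fixed nonzero $\mathbb{F}_p$-linear map, and let $B=(B_{i,j})_{(i,j)\in\mathbb{Z}_s\times\mathbb{Z}_t}$ be given by $B_{i,j}=\psi(\beta^i\gamma^j)$. Then a subset $S\subset \mathbb{Z}_s\times\mathbb{Z}_t$ with $|S|=n$ is a sampling pattern if and only if it is a basis pattern.
   Context: Here $\mathbb{Z}_s=\mathbb{Z}/s\mathbb{Z}$, $\mathbb{Z}_t=\mathbb{Z}/t\mathbb{Z}$; the expression $\beta^i\gamma^j$ is well defined for $(i,j)\in\mathbb{Z}_s\times\mathbb{Z}_t$ since $\beta$ has order $s$ and $\gamma$ has order $t$, and $(i,j)\mapsto\beta^i\gamma^j$ is a bijection $\mathbb{Z}_s\times\mathbb{Z}_t\to\mathbb{F}_{p^n}^\times$. For $S\subset\mathbb{Z}_s\times\mathbb{Z}_t$, let $A|_S=\{\beta^i\gamma^j : (i,j)\in S\}\subset\mathbb{F}_{p^n}$. $S$ is a basis pattern if $A|_S$ is an $\mathbb{F}_p$-basis of $\mathbb{F}_{p^n}$. For $(a,b)\in\mathbb{Z}_s\times\mathbb{Z}_t$, the value pattern of $S$ under the shift $(a,b)$ is the vector $v_{a,b}=(B_{i+a,\,j+b})_{(i,j)\in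 S}\in\mathbb{F}_p^{S}\cong\mathbb{F}_p^n$ (indices taken mod $s$ and mod $t$). $S$ is a sampling pattern if the $p^n-1$ value patterns $v_{a,b}$, $(a,b)\in\mathbb{Z}_s\times\mathbb{Z}_t$, are pairwise distinct and are exactly the nonzero vectors of $\mathbb{F}_p^{S}$ (each occurring exactly once). *)

(* Defs.v *)
From HB Require Import structures.
From mathcomp Require Import all_boot all_order all_algebra all_field.
Set Implicit Arguments. Unset Strict Implicit. Unset Printing Implicit Defensive.
Import GRing.Theory.
Local Open Scope ring_scope.

(* The field F_{p^n} is modelled as a field extension L of 'F_p with
   \dim_{F_p} L = n.  Indices of Z_s x Z_t are ordinals 'I_s * 'I_t, with
   arithmetic taken mod s and mod t. *)

Section Patterns.
Variables (p s t : nat) (L : fieldExtType 'F_p).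
Variables (beta gamma : L) (psi : L -> 'F_p).

Definition Bmat (i j : nat) : 'F_p := psi (beta ^+ i * gamma ^+ j).

Definition A_on (S : {set 'I_s * 'I_t}) : seq L :=
  [seq beta ^+ (x.1 : nat) * gamma ^+ (x.2 : nat) | x : 'I_s * 'I_t <- enum S].

Definition basis_pattern (S : {set 'I_s * 'I_t}) : Prop :=
  basis_of fullv (A_on S).

Definition value_pattern (S : {set 'I_s * 'I_t}) (ab : 'I_s * 'I_t)
  : {ffun {x : 'I_s * 'I_t | x \in S} -> 'F_p} :=
  [ffun x : {x : 'I_s * 'I_t | x \in S} => Bmat (((val x).1 + ab.1) %% s) (((val x).2 + ab.2) %% t)].

Definition sampling_pattern (S : {set 'I_s * 'I_t}) : Prop :=
  injective (value_pattern S) /\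
  (forall ab, value_pattern S ab != 0) /\
  (forall w : {ffun {x : 'I_s * 'I_t | x \in S} -> 'F_p},
      w != 0 -> exists ab, value_pattern S ab = w).

End Patterns.

(* Main.v *)
Require Import Defs.
From HB Require Import structures.
From mathcomp Require Import all_boot all_order all_algebra all_field.
From mathcomp Require Import ring.
Import GRing.Theory.
Local Open Scope ring_scope.

Lemma cancel_mod (s t a a' : nat) : coprime s t -> (a < s)%N -> (a' < s)%N ->
  (t * a = t * a' %[mod s])%N -> a = a'.
Proof.
move=> co.
wlog le : a a' / (a' <= a)%N.
  move=> W ha ha' e; case: (leqP a' a) => h; first exact: W.
  by apply/esym/W => //; apply: ltnW.
move=> ha ha' /eqP e; move: e; rewrite eqn_mod_dvd ?leq_mul2l ?le ?orbT //.
rewrite -mulnBr Gauss_dvdr // /dvdn modn_small; last first.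
  by apply: leq_ltn_trans ha; apply: leq_subr.
move/eqP => h; apply/eqP; rewrite eqn_leq le andbT -subn_eq0 h //.
Qed.

Theorem mainTheorem1 (p n s t : nat) (L : fieldExtType 'F_p)
  (alpha : L) (psi : {linear L -> ('F_p)^o}) (S : {set 'I_s * 'I_t}) :
  prime p -> (1 <= n)%N -> \dim (fullv : {vspace L}) = n ->
  (0 < s)%N -> (s < t)%N -> (p ^ n).-1 = (s * t)%N -> coprime s t ->
  (p ^ n).-1.-primitive_root alpha ->
  (exists x, psi x != 0) ->
  #|S| = n ->
  (sampling_pattern (alpha ^+ t) (alpha ^+ s) psi S <->
   basis_pattern (alpha ^+ t) (alpha ^+ s) S).
Proof.
move=> pp n1 dimL s0 st N co prim [u psiu] cS.
have t0 : (0 < t)%N by apply: leq_trans st; apply: leq_trans s0 _.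
set e := fun x : 'I_s * 'I_t => (alpha ^+ t) ^+ x.1 * (alpha ^+ s) ^+ x.2.
have aN : alpha ^+ (s * t) = 1 by rewrite -N; apply: prim_expr_order.
have bs : (alpha ^+ t) ^+ s = 1 by rewrite -exprM mulnC.
have gt : (alpha ^+ s) ^+ t = 1 by rewrite -exprM.
have eE x : e x = alpha ^+ (t * x.1 + s * x.2)%N by rewrite /e -!exprM exprD.
have einj : injective e.
  move=> [a b] [a' b'] /eqP; rewrite !eE (eq_prim_root_expr prim) N => /eqP h.
  have hs := h; have ht := h.
  move: hs => /(congr1 (modn^~ s)); rewrite !modn_dvdm ?dvdn_mulr //.
  rewrite ![(t * _ + s * _)%N]addnC ![(s * _)%N]mulnC !modnMDl /= => hs.
  move: ht => /(congr1 (modn^~ t)); rewrite !modn_dvdm ?dvdn_mull //.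
  rewrite ![(t * _)%N]mulnC !modnMDl /= => ht.
  have ea := cancel_mod _ _ _ _ co (ltn_ord a) (ltn_ord a') hs.
  have eb := cancel_mod _ _ _ _ (etrans (coprime_sym t s) co) (ltn_ord b) (ltn_ord b') ht.
  by congr (_, _); apply: val_inj.
have e0 x : e x != 0.
  rewrite eE; apply/eqP => h.
  have : alpha ^+ (t * x.1 + s * x.2)%N ^+ (s * t) = 1 by rewrite -exprM mulnC exprM aN expr1n.
  by rewrite h expr0n muln_eq0 !eqn0Ngt s0 t0 /= => /eqP; rewrite eq_sym oner_eq0.
have vpE ab : value_pattern (alpha ^+ t) (alpha ^+ s) psi S ab =
   [ffun x : {x | x \in S} => psi (e ab * e (val x))].
  apply/ffunP => x; rewrite !ffunE /Bmat (expr_mod _ bs) (expr_mod _ gt) /e !exprD.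
  by congr (psi _); ring.
set X := A_on (alpha ^+ t) (alpha ^+ s) S.
pose x0 : 'I_s * 'I_t := (Ordinal s0, Ordinal t0).
have sizeXE : size X = size (enum S) by rewrite size_map.
have sizeX : size X = n by rewrite sizeXE -cardE cS.
have Xi (i : nat) : (i < size X)%N -> X`_i = e (nth x0 (enum S) i).
  by move=> hi; rewrite (nth_map x0) // -sizeXE.
have memi (i : nat) : (i < size X)%N -> nth x0 (enum S) i \in S.
  by move=> hi; rewrite -mem_enum mem_nth // -sizeXE.
have kerL : basis_of fullv X -> forall d, (forall z, z \in S -> psi (d * e z) = 0) -> d = 0.
  move=> bX d hd; apply/eqP; apply/negPn/negP => dn0.
  move/andP: bX => [/eqP spX _].
  have : u / d \in <<in_tuple X>>%VS by rewrite /= spX memvf.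
  move/coord_span => hu.
  have : psi u = 0.
    have -> : u = d * (u / d) by rewrite mulrC divfK.
    rewrite hu mulr_sumr linear_sum big1 // => i _.
    by rewrite -scalerAr linearZ /= (Xi _ (ltn_ord i)) hd ?memi // scaler0.
  by move/eqP; rewrite (negbTE psiu).
split.
  move=> [_ [_ surj]].
  rewrite /basis_pattern -/X basisEfree subvf dimL sizeX leqnn !andbT /=.
  apply/(@freeP _ _ _ (in_tuple X)) => k hk i0.
  have hab ab : \sum_(i < size X) k i * psi (e ab * X`_i) = 0.
    transitivity (psi (e ab * \sum_(i < size X) k i *: X`_i)); last by rewrite hk mulr0 linear0.
    rewrite mulr_sumr linear_sum.
    by apply: eq_bigr => i _; rewrite -scalerAr linearZ.
  set z0 := nth x0 (enum S) i0.
  have z0S : z0 \in S := memi i0 (ltn_ord i0).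
  pose w : {ffun {x | x \in S} -> 'F_p} := [ffun x => if val x == z0 then 1 else 0].
  have wn0 : w != 0.
    apply/eqP => /ffunP /(_ (exist (fun x => x \in S) z0 z0S)); rewrite !ffunE /= eqxx => /eqP.
    by rewrite oner_eq0.
  case: (surj w wn0) => ab hab'.
  have hw (i : 'I_(size X)) : psi (e ab * X`_i) = if (i == i0 :> nat) then 1 else 0.
    rewrite (Xi _ (ltn_ord i)).
    have := hab'; move/ffunP/(_ (exist (fun x => x \in S) _ (memi _ (ltn_ord i)))).
    rewrite vpE !ffunE /= => ->.
    by rewrite /z0 nth_uniq ?enum_uniq // -sizeXE.
  have := hab ab; rewrite (bigD1 i0) //= hw eqxx mulr1 big1 ?addr0 // => i ne.
  by rewrite hw; move: ne; rewrite -(inj_eq val_inj) => /negbTE ->; rewrite mulr0.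
move=> bX.
have ker := kerL bX.
have vinj : injective (value_pattern (alpha ^+ t) (alpha ^+ s) psi S).
  move=> ab ab' /ffunP h; apply: einj; apply/eqP; rewrite -subr_eq0; apply/eqP/ker => z zS.
  have := h (exist (fun x => x \in S) z zS); rewrite !vpE !ffunE /= => hz.
  by rewrite mulrBl linearB /= hz subrr.
have vnz ab : value_pattern (alpha ^+ t) (alpha ^+ s) psi S ab != 0.
  apply/eqP => /ffunP h; move/eqP: (e0 ab); apply; apply: ker => z zS.
  by have := h (exist (fun x => x \in S) z zS); rewrite vpE !ffunE.
split=> //; split=> // w wn0.
pose I := [set value_pattern (alpha ^+ t) (alpha ^+ s) psi S ab | ab in [set: 'I_s * 'I_t]].
have : I == [set~ (0 : {ffun {x : 'I_s * 'I_t | x \in S} -> 'F_p})].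
  rewrite eqEcard; apply/andP; split.
    by apply/subsetP => _ /imsetP [ab _ ->]; rewrite in_setC1 vnz.
  rewrite card_imset // cardsT card_prod !card_ord -N cardsC1 card_ffun card_Fp // card_sig.
  have -> : #|[pred x in S]| = n by rewrite -cS; apply: eq_card.
  by [].
move/eqP => IE; have : w \in I by rewrite IE in_setC1.
by case/imsetP => ab _ ->; exists ab.
Qed.
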